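(* Let $\mathbf{a},\mathbf{b},\mathbf{c},\mathbf{d}\in\mathcal{R}^n$ and $\mathbf{e},\mathbf{f},\mathbf{g},\mathbf{h}\in\mathcal{R}^m$. Define the $m\times n$ matrices \begin{align*} Q&=\mathbf{f}^{*t}\mathbf{a}+\mathbf{g}^t\mathbf{c}-\mathbf{e}^t\mathbf{b}^*+\mathbf{h}^t\mathbf{d},\\ R&=\mathbf{f}^{*t}\mathbf{b}+\mathbf{g}^{*t}\mathbf{d}+\mathbf{e}^t\mathbf{a}^*-\mathbf{h}^{*t}\mathbf{c},\\ S&=\mathbf{g}^{*t}\mathbf{a}-\mathbf{f}^t\mathbf{c}-\mathbf{h}^t\mathbf{b}-\mathbf{e}^t\mathbf{d}^*,\\ T&=\mathbf{g}^{t}\mathbf{b}-\mathbf{f}^t\mathbf{d}+\mathbf{h}^{*t}\mathbf{a}+\mathbf{e}^t\mathbf{c}^*. \end{align*} Then in $\mathcal{R}[x^{\pm1},y^{\pm1}]$, \[ (\psi_Q\psi_Q^*+\psi_R\psi_R^*+\psi_S\psi_S^*+\psi_T\psi_T^* )(x,y)=(\psi_{\mathbf{a}}\psi^*_{\mathbf{a}}+\psi_{\mathbf{b}}\psi^*_{\mathbf{b}}+\psi_{\mathbf{c}}\psi^*_{\mathbf{c}}+\psi_{\mathbf{d}}\psi^*_{\mathbf{d}})(x)\,(\psi_{\mathbf{e}}\psi^*_{\mathbf{e}}+\psi_{\mathbf{f}}\psi^*_{\mathbf{f}}+\psi_{\mathbf{g}}\psi^*_{\mathbf{g}}+\psi_{\mathbf{h}}\psi^*_{\mathbf{h}})(y).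 \]
   Context: $\mathcal{R}$ is a commutative ring with identity equipped with an involutive ring automorphism $*$. It is extended to $\mathcal{R}[x^{\pm1}]$ by acting on coefficients and $x\mapsto x^{-1}$, and to $\mathcal{R}[x^{\pm1},y^{\pm1}]$ by acting on coefficients, $x\mapsto x^{-1}$, $y\mapsto y^{-1}$; $f^*$ denotes the image of $f$. For $\mathbf{a}=(a_0,\dots,a_{l-1})\in\mathcal{R}^l$: $\mathbf{a}^*=(a_{l-1}^*,\dots,a_0^* )$, $\phi_{\mathbf{a}}(x)=\sum_{i=0}^{l-1}a_ix^i$, and $\psi_{\mathbf{a}}(x)=x^{1-l}\phi_{\mathbf{a}}(x^2)$. Vectors in $\mathcal{R}^k$ are $1\times k$ matrices, $t$ is transpose, so $\mathbf{u}^t\mathbf{v}$ is the $m\times n$ outer product. For $A\in\mathcal{R}^{m\times n}$ with rows $\mathbf{a}_0,\dots,\mathbf{a}_{m-1}$, $\psi_A(x,y)=\sum_{i=0}^{m-1}\psi_{\mathbf{a}_i}(x)\,y^{2i+1-m}$. *)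

(* Defs.v *)
From HB Require Import structures.
From mathcomp Require Import all_boot all_order all_algebra.
Set Implicit Arguments. Unset Strict Implicit. Unset Printing Implicit Defensive.
Import Order.TTheory GRing.Theory Num.Theory.
Local Open Scope ring_scope.

(* The Laurent polynomial ring R[x^{+-1}, y^{+-1}] is modelled as formal
   finite sums of monomials c x^i y^j, given as lists of (c, (i, j)) with
   i j : int.  Two formal sums denote the same Laurent polynomial iff all
   their coefficients agree (lcoef), see [leqL]. *)
Definition laurent2 (R : Type) := seq (R * (int * int)).

Section Laurent.
Variable R : comPzRingType.

Definition lcoef (p : laurent2 R) (i j : int) : R :=
  \sum_(t <- p | t.2 == (i, j)) t.1.

Definition leqL (p q : laurent2 R) : Prop :=
  forall i j : int, lcoef p i j = lcoef q i j.

Definition laddL (p q : laurent2 R) : laurent2 R := p ++ q.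

Definition lmulL (p q : laurent2 R) : laurent2 R :=
  [seq (s.1 * t.1, (s.2.1 + t.2.1, s.2.2 + t.2.2)) | s <- p, t <- q].

Definition lstarL (star : R -> R) (p : laurent2 R) : laurent2 R :=
  [seq (star t.1, (- t.2.1, - t.2.2)) | t <- p].

Definition vstar (star : R -> R) (l : nat) (a : 'rV[R]_l) : 'rV[R]_l :=
  \row_(i < l) star (a 0 (rev_ord i)).

(* psi_a(x) = x^{1-l} phi_a(x^2) = sum_i a_i x^{2i+1-l}, as element of
   R[x^{+-1}] embedded in R[x^{+-1},y^{+-1}] (y-exponent 0) *)
Definition psix (l : nat) (a : 'rV[R]_l) : laurent2 R :=
  [seq (a 0 i, (2%:Z * (nat_of_ord i)%:Z + 1 - l%:Z, 0%:Z)) | i <- enum 'I_l].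

Definition psiy (l : nat) (a : 'rV[R]_l) : laurent2 R :=
  [seq (a 0 i, (0%:Z, 2%:Z * (nat_of_ord i)%:Z + 1 - l%:Z)) | i <- enum 'I_l].

(* psi_A(x,y) = sum_i psi_{a_i}(x) y^{2i+1-m}, a_i the rows of A *)
Definition psiM (m n : nat) (A : 'M[R]_(m, n)) : laurent2 R :=
  flatten [seq lmulL (psix (row i A))
                 [:: (1, (0%:Z, 2%:Z * (nat_of_ord i)%:Z + 1 - m%:Z))]
          | i <- enum 'I_m].

Definition lnormL (star : R -> R) (p : laurent2 R) : laurent2 R :=
  lmulL p (lstarL star p).

End Laurent.

(* Main.v *)
Require Import Defs.
From HB Require Import structures.
From mathcomp Require Import all_boot all_order all_algebra.
From Stdlib Require Import Setoid Morphisms Ring_theory Ring.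
From mathcomp Require Import zify.
Import GRing.Theory.
Local Open Scope ring_scope.
Set Implicit Arguments.

Section LR.
Variable R : comPzRingType.
Local Notation L := (laurent2 R).

Definition lopp (p : L) : L := [seq (- t.1, t.2) | t <- p].
Definition lsub (p q : L) : L := laddL p (lopp q).
Definition lzero : L := [::].
Definition lone : L := [:: (1, (0%:Z, 0%:Z))].

Lemma lcoef_cat (p q : L) i j : lcoef (p ++ q) i j = lcoef p i j + lcoef q i j.
Proof. by rewrite /lcoef big_cat. Qed.

Lemma lcoef_nil i j : lcoef (lzero) i j = 0.
Proof. by rewrite /lcoef big_nil. Qed.

Lemma lcoef_opp (p : L) i j : lcoef (lopp p) i j = - lcoef p i j.
Proof. by rewrite /lcoef big_map sumrN. Qed.

Lemma lcoef_mul (p q : L) i j :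
  lcoef (lmulL p q) i j = \sum_(s <- p) s.1 * lcoef q (i - s.2.1) (j - s.2.2).
Proof.
rewrite /lmulL; elim: p => [|s p IH]; first by rewrite /lcoef !big_nil.
rewrite allpairs_cons lcoef_cat IH big_cons; congr (_ + _).
rewrite /lcoef big_map mulr_sumr; apply: congr_big => // t.
rewrite !xpair_eqE; congr (_ && _); apply/eqP/eqP => [<-|->]; idtac.
all: rewrite /=; first [by rewrite addrC addKr | by rewrite addrC subrK].
Qed.

Lemma eq_subsym (x y i : int) : (x == i - y) = (y == i - x).
Proof. by rewrite eq_sym subr_eq [RHS]eq_sym subr_eq addrC. Qed.

Lemma lcoef_mulr (p q : L) i j :
  lcoef (lmulL p q) i j = \sum_(t <- q) lcoef p (i - t.2.1) (j - t.2.2) * t.1.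
Proof.
rewrite lcoef_mul /lcoef.
under eq_bigr do rewrite mulr_sumr big_mkcond.
rewrite exchange_big /=; apply eq_bigr => t _.
rewrite mulr_suml [RHS]big_mkcond; apply: eq_bigr => s _.
case: s t => [c [a b]] [d [a' b']] /=.
by rewrite !xpair_eqE [a' == _]eq_subsym [b' == _]eq_subsym; case: ifP.
Qed.

Definition lequiv : Equivalence (@leqL R).
Proof.
split; first by move=> p i j.
  by move=> p q H i j; rewrite H.
by move=> p q r H1 H2 i j; rewrite H1 H2.
Qed.

Lemma ladd_ext (p p' q q' : L) : leqL p p' -> leqL q q' -> leqL (laddL p q) (laddL p' q').
Proof. by move=> H1 H2 i j; rewrite /laddL !lcoef_cat H1 H2. Qed.

Lemma lopp_ext (p p' : L) : leqL p p' -> leqL (lopp p) (lopp p').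
Proof. by move=> H1 i j; rewrite !lcoef_opp H1. Qed.

Lemma lmul_ext (p p' q q' : L) : leqL p p' -> leqL q q' -> leqL (lmulL p q) (lmulL p' q').
Proof.
move=> H1 H2 i j; rewrite lcoef_mulr.
under eq_bigr do rewrite H1.
rewrite -lcoef_mulr !lcoef_mul; apply: eq_bigr => s _; by rewrite H2.
Qed.

Lemma lring_theory : ring_theory lzero lone (@laddL R) (@lmulL R) lsub lopp (@leqL R).
Proof.
split.
- by move=> p i j; rewrite /laddL lcoef_cat lcoef_nil add0r.
- by move=> p q i j; rewrite /laddL !lcoef_cat addrC.
- by move=> p q r i j; rewrite /laddL !lcoef_cat addrA.
- by move=> p i j; rewrite lcoef_mul big_seq1 /= !subr0 mul1r.
- by move=> p q i j; rewrite lcoef_mul lcoef_mulr; apply: eq_bigr => s _; rewrite mulrC.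
- move=> p q r i j; rewrite [LHS]lcoef_mul [RHS]lcoef_mulr.
  under eq_bigr do rewrite lcoef_mulr mulr_sumr.
  under [RHS]eq_bigr do rewrite lcoef_mul mulr_suml.
  rewrite exchange_big /=; apply: eq_bigr => s _; apply: eq_bigr => t _.
  by rewrite mulrA (addrAC i) (addrAC j).
- by move=> p q r i j; rewrite /laddL lcoef_mul big_cat /= !lcoef_cat -!lcoef_mul.
- by [].
- by move=> p i j; rewrite /lsub /laddL lcoef_cat lcoef_opp subrr lcoef_nil.
Qed.

Definition lring_ext : ring_eq_ext (@laddL R) (@lmulL R) lopp (@leqL R).
Proof.
split.
- by move=> p p' H q q' H'; apply: ladd_ext.
- by move=> p p' H q q' H'; apply: lmul_ext.
- by move=> p p' H; apply: lopp_ext.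
Qed.

Existing Instance lequiv.
Add Ring lring : lring_theory (setoid lequiv lring_ext).


Lemma lcoef_flatten (s : seq L) i j : lcoef (flatten s) i j = \sum_(p <- s) lcoef p i j.
Proof.
elim: s => [|p s IH]; first by rewrite big_nil /lcoef big_nil.
by rewrite /= lcoef_cat IH big_cons.
Qed.

Lemma lcoef_psix n (v : 'rV[R]_n) i j : lcoef (psix v) i j =
  \sum_(l < n) (if (2%:Z * (nat_of_ord l)%:Z + 1 - n%:Z == i) && (0%:Z == j) then v 0 l else 0).
Proof. by rewrite /lcoef /psix big_map big_enum_cond /= big_mkcond. Qed.

Lemma lcoef_psiy n (v : 'rV[R]_n) i j : lcoef (psiy v) i j =
  \sum_(l < n) (if (0%:Z == i) && (2%:Z * (nat_of_ord l)%:Z + 1 - n%:Z == j) then v 0 l else 0).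
Proof. by rewrite /lcoef /psiy big_map big_enum_cond /= big_mkcond. Qed.

Lemma lcoef_psiM m n (A : 'M[R]_(m, n)) i j : lcoef (psiM A) i j =
  \sum_(k < m) \sum_(l < n) (if (2%:Z * (nat_of_ord l)%:Z + 1 - n%:Z == i) &&
      (0%:Z == j - (2%:Z * (nat_of_ord k)%:Z + 1 - m%:Z)) then A k l else 0).
Proof.
rewrite /psiM lcoef_flatten big_map big_enum /=; apply: eq_bigr => k _.
rewrite lcoef_mulr big_seq1 /= mulr1 subr0 lcoef_psix.
by apply: eq_bigr => l _; rewrite mxE.
Qed.

Lemma psiM_add m n (A B : 'M[R]_(m, n)) : leqL (psiM (A + B)) (laddL (psiM A) (psiM B)).
Proof.
move=> i j; rewrite /laddL lcoef_cat !lcoef_psiM -big_split; apply: eq_bigr => k _.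
rewrite -big_split; apply: eq_bigr => l _; rewrite mxE; by case: ifP => _ /=; rewrite ?addr0.
Qed.

Lemma psiM_opp m n (A : 'M[R]_(m, n)) : leqL (psiM (- A)) (lopp (psiM A)).
Proof.
move=> i j; rewrite lcoef_opp !lcoef_psiM -sumrN; apply: eq_bigr => k _.
rewrite -sumrN; apply: eq_bigr => l _; rewrite mxE; case: ifP => _ //; by rewrite oppr0.
Qed.

Lemma psiM_outer m n (u : 'rV[R]_m) (v : 'rV[R]_n) :
  leqL (psiM (u^T *m v)) (lmulL (psiy u) (psix v)).
Proof.
move=> i j; rewrite lcoef_psiM lcoef_mul /psiy big_map big_enum /=; apply: eq_bigr => k _.
rewrite subr0 lcoef_psix mulr_sumr; apply: eq_bigr => l _.
rewrite !mxE big_ord1 !mxE; case: ifP => _ //; by rewrite mulr0.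
Qed.


Section Star.
Variable star : {rmorphism R -> R}.

Lemma lcoef_star (p : L) i j : lcoef (lstarL star p) i j = star (lcoef p (- i) (- j)).
Proof.
rewrite /lcoef /lstarL big_map rmorph_sum; apply: congr_big => // -[c [a b]] /=.
by rewrite !xpair_eqE !eqr_oppLR.
Qed.

Lemma lstar_ext (p p' : L) : leqL p p' -> leqL (lstarL star p) (lstarL star p').
Proof. by move=> H i j; rewrite !lcoef_star H. Qed.

Lemma lstar_add (p q : L) : leqL (lstarL star (laddL p q)) (laddL (lstarL star p) (lstarL star q)).
Proof. by move=> i j; rewrite /laddL lcoef_cat !lcoef_star lcoef_cat rmorphD. Qed.

Lemma lstar_opp (p : L) : leqL (lstarL star (lopp p)) (lopp (lstarL star p)).
Proof. by move=> i j; rewrite lcoef_opp !lcoef_star lcoef_opp rmorphN. Qed.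

Lemma lstar_mul (p q : L) : leqL (lstarL star (lmulL p q)) (lmulL (lstarL star p) (lstarL star q)).
Proof.
move=> i j; rewrite lcoef_star !lcoef_mul rmorph_sum /lstarL big_map; apply: eq_bigr => s _.
by rewrite rmorphM /= -/(lstarL star q) lcoef_star !opprK !opprD.
Qed.

Hypothesis star_invol : involutive star.

Lemma lstar_star (p : L) : leqL (lstarL star (lstarL star p)) p.
Proof. by move=> i j; rewrite !lcoef_star star_invol !opprK. Qed.

Lemma ex_rev n (l : 'I_n) :
  2%:Z * (nat_of_ord (rev_ord l))%:Z + 1 - n%:Z = - (2%:Z * (nat_of_ord l)%:Z + 1 - n%:Z).
Proof. have := ltn_ord l; rewrite /=; lia. Qed.

Lemma psix_st n (v : 'rV[R]_n) : leqL (psix (vstar star v)) (lstarL star (psix v)).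
Proof.
move=> i j; rewrite lcoef_star !lcoef_psix rmorph_sum (reindex_inj rev_ord_inj) /=.
apply: eq_bigr => l _; rewrite ex_rev eqr_oppLR [0%:Z == - _]eq_sym oppr_eq0 [_ == 0%:Z]eq_sym /vstar mxE rev_ordK.
by case: ifP => _; rewrite ?rmorph0.
Qed.

Lemma psiy_st n (v : 'rV[R]_n) : leqL (psiy (vstar star v)) (lstarL star (psiy v)).
Proof.
move=> i j; rewrite lcoef_star !lcoef_psiy rmorph_sum (reindex_inj rev_ord_inj) /=.
apply: eq_bigr => l _; rewrite ex_rev eqr_oppLR [0%:Z == - _]eq_sym oppr_eq0 [_ == 0%:Z]eq_sym /vstar mxE rev_ordK.
by case: ifP => _; rewrite ?rmorph0.
Qed.
End Star.


#[local] Instance ladd_prop : Proper (@leqL R ==> @leqL R ==> @leqL R) (@laddL R).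
Proof. by move=> ? ? ? ? ? ?; apply: ladd_ext. Qed.
#[local] Instance lmul_prop : Proper (@leqL R ==> @leqL R ==> @leqL R) (@lmulL R).
Proof. by move=> ? ? ? ? ? ?; apply: lmul_ext. Qed.
#[local] Instance lopp_prop : Proper (@leqL R ==> @leqL R) lopp.
Proof. by move=> ? ? ?; apply: lopp_ext. Qed.
#[local] Instance lstar_prop (star : {rmorphism R -> R}) : Proper (@leqL R ==> @leqL R) (lstarL star).
Proof. by move=> ? ? ?; apply: lstar_ext. Qed.


Lemma psiM4 m n (A1 A2 A3 A4 : 'M[R]_(m, n)) :
  leqL (psiM (A1 + A2 + A3 + A4)) (laddL (laddL (laddL (psiM A1) (psiM A2)) (psiM A3)) (psiM A4)).
Proof.
move=> i j.
by rewrite (psiM_add _ _ i j) /laddL !lcoef_cat (psiM_add _ _ i j) lcoef_cat (psiM_add _ _ i j) lcoef_cat.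
Qed.

Lemma psiMo m n (u : 'rV[R]_m) (v : 'rV[R]_n) :
  leqL (psiM (- (u^T *m v))) (lopp (lmulL (psiy u) (psix v))).
Proof. by move=> i j; rewrite (psiM_opp _ i j) !lcoef_opp (psiM_outer _ _ i j). Qed.

Lemma lnorm_ext (star : {rmorphism R -> R}) (p q : L) : leqL p q -> leqL (lnormL star p) (lnormL star q).
Proof. by move=> H; apply: lmul_ext => //; apply: lstar_ext. Qed.

Lemma lequiv_trans (p q r : L) : leqL p q -> leqL q r -> leqL p r.
Proof. by move=> H1 H2 i j; rewrite H1 H2. Qed.

Lemma main (star : {rmorphism R -> R})
  (star_invol : involutive star) (n m : nat)
  (a b c d : 'rV[R]_n) (e f g h : 'rV[R]_m) :
  let st := vstar star in
  let Q := (st _ f)^T *m a + g^T *m c - e^T *m st _ b + h^T *m d in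
  let R' := (st _ f)^T *m b + (st _ g)^T *m d + e^T *m st _ a - (st _ h)^T *m c in
  let S := (st _ g)^T *m a - f^T *m c - h^T *m b - e^T *m st _ d in
  let T := g^T *m b - f^T *m d + (st _ h)^T *m a + e^T *m st _ c in
  leqL
    (laddL (laddL (laddL (lnormL star (psiM Q)) (lnormL star (psiM R')))
                  (lnormL star (psiM S))) (lnormL star (psiM T)))
    (lmulL
      (laddL (laddL (laddL (lnormL star (psix a)) (lnormL star (psix b)))
                    (lnormL star (psix c))) (lnormL star (psix d)))
      (laddL (laddL (laddL (lnormL star (psiy e)) (lnormL star (psiy f)))
                    (lnormL star (psiy g))) (lnormL star (psiy h)))).
Proof.
move=> st Q R' S T.
have hQ : leqL (psiM Q) (laddL (laddL (laddL (lmulL (psiy (st _ f)) (psix a)) (lmulL (psiy g) (psix c)))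
     (lopp (lmulL (psiy e) (psix (st _ b))))) (lmulL (psiy h) (psix d))).
  apply: lequiv_trans (psiM4 _ _ _ _) _.
  apply: ladd_ext; last exact: psiM_outer.
  apply: ladd_ext; last exact: psiMo.
  apply: ladd_ext; exact: psiM_outer.
have hR : leqL (psiM R') (laddL (laddL (laddL (lmulL (psiy (st _ f)) (psix b)) (lmulL (psiy (st _ g)) (psix d)))
     (lmulL (psiy e) (psix (st _ a)))) (lopp (lmulL (psiy (st _ h)) (psix c)))).
  apply: lequiv_trans (psiM4 _ _ _ _) _.
  apply: ladd_ext; last exact: psiMo.
  apply: ladd_ext; last exact: psiM_outer.
  apply: ladd_ext; exact: psiM_outer.
have hS : leqL (psiM S) (laddL (laddL (laddL (lmulL (psiy (st _ g)) (psix a)) (lopp (lmulL (psiy f) (psix c))))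
     (lopp (lmulL (psiy h) (psix b)))) (lopp (lmulL (psiy e) (psix (st _ d))))).
  apply: lequiv_trans (psiM4 _ _ _ _) _.
  apply: ladd_ext; last exact: psiMo.
  apply: ladd_ext; last exact: psiMo.
  apply: ladd_ext; [exact: psiM_outer | exact: psiMo].
have hT : leqL (psiM T) (laddL (laddL (laddL (lmulL (psiy g) (psix b)) (lopp (lmulL (psiy f) (psix d))))
     (lmulL (psiy (st _ h)) (psix a))) (lmulL (psiy e) (psix (st _ c)))).
  apply: lequiv_trans (psiM4 _ _ _ _) _.
  apply: ladd_ext; last exact: psiM_outer.
  apply: ladd_ext; last exact: psiM_outer.
  apply: ladd_ext; [exact: psiM_outer | exact: psiMo].
apply: lequiv_trans (ladd_ext (ladd_ext (ladd_ext (lnorm_ext star hQ) (lnorm_ext star hR))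
   (lnorm_ext star hS)) (lnorm_ext star hT)) _.
clear hQ hR hS hT; rewrite /lnormL /st; clear T S R' Q st.
repeat setoid_rewrite psix_st.
repeat setoid_rewrite psiy_st.
repeat setoid_rewrite lstar_add.
repeat setoid_rewrite lstar_opp.
repeat setoid_rewrite lstar_mul.
repeat setoid_rewrite (lstar_star _ star_invol).
move: (lstarL star (psix a)) (psix a) (lstarL star (psix b)) (psix b) (lstarL star (psix c)) (psix c) (lstarL star (psix d)) (psix d) (lstarL star (psiy e)) (psiy e) (lstarL star (psiy f)) (psiy f) (lstarL star (psiy g)) (psiy g) (lstarL star (psiy h)) (psiy h) => x0 x1 x2 x3 x4 x5 x6 x7 x8 x9 x10 x11 x12 x13 x14 x15.
ring.
Qed.
End LR.

Unset Implicit Arguments.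

Theorem lemma3p1 (R : comPzRingType) (star : {rmorphism R -> R})
  (star_invol : involutive star) (n m : nat)
  (a b c d : 'rV[R]_n) (e f g h : 'rV[R]_m) :
  let st := vstar star in
  let Q := (st _ f)^T *m a + g^T *m c - e^T *m st _ b + h^T *m d in
  let R' := (st _ f)^T *m b + (st _ g)^T *m d + e^T *m st _ a - (st _ h)^T *m c in
  let S := (st _ g)^T *m a - f^T *m c - h^T *m b - e^T *m st _ d in
  let T := g^T *m b - f^T *m d + (st _ h)^T *m a + e^T *m st _ c in
  leqL
    (laddL (laddL (laddL (lnormL star (psiM Q)) (lnormL star (psiM R')))
                  (lnormL star (psiM S))) (lnormL star (psiM T)))
    (lmulL
      (laddL (laddL (laddL (lnormL star (psix a)) (lnormL star (psix b)))
                    (lnormL star (psix c))) (lnormL star (psix d)))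
      (laddL (laddL (laddL (lnormL star (psiy e)) (lnormL star (psiy f)))
                    (lnormL star (psiy g))) (lnormL star (psiy h)))).
Proof. exact: main. Qed.
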